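(* For real numbers $\epsilon_1,\epsilon_2\ge 0$ let \[ D_{\epsilon_1,\epsilon_2}=\begin{bmatrix}0&4&0\\2&0&4+\epsilon_1\\3&2+\epsilon_2&0\end{bmatrix}. \] There exists $\delta>0$ such that for all $\epsilon_1,\epsilon_2,\epsilon_1',\epsilon_2'\in[0,\delta]$, the bimatrix game $(D_{\epsilon_1,\epsilon_2},D_{\epsilon_1',\epsilon_2'}^T)$ has exactly one Nash equilibrium; this equilibrium has full support (both players assign positive probability to all three pure strategies); and if $(\epsilon_1,\epsilon_2)=(\epsilon_1',\epsilon_2')$ then this equilibrium is symmetric.
   Context: A bimatrix game $(A,B)$ with $m\times n$ real payoff matrices: the first player chooses a mixed strategy $\mathbf{x}\in\Delta_m=\{\mathbf{x}\in\mathbb{R}^m:\mathbf{x}\ge 0,\sum_i x_i=1\}$, the second $\mathbf{y}\in\Delta_n$; payoffs are $\mathbf{x}^TA\mathbf{y}$ and $\mathbf{x}^TB\mathbf{y}$. $(\mathbf{x},\mathbf{y})$ is a Nash equilibrium (NE) if neither player can increase her payoff by unilaterally changing her mixed strategy. A NE $(\mathbf{x},\mathbf{y})$ is symmetric if $\mathbf{x}=\mathbf{y}$. *)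

(* Defs.v *)
From Stdlib Require Import Reals Lra.
Open Scope R_scope.

(* A 3x3 real matrix: entry (i,j) for i,j in {0,1,2}; a mixed strategy is a
   vector x : nat -> R, meaningful on indices 0,1,2. *)
Definition mat3 := nat -> nat -> R.
Definition vec3 := nat -> R.

Definition sum3 (f : nat -> R) : R := f 0%nat + f 1%nat + f 2%nat.

Definition in_simplex (x : vec3) : Prop :=
  (forall i, (i < 3)%nat -> 0 <= x i) /\ sum3 x = 1.

Definition bilin (x : vec3) (A : mat3) (y : vec3) : R :=
  sum3 (fun i => sum3 (fun j => x i * A i j * y j)).

Definition transpose3 (A : mat3) : mat3 := fun i j => A j i.

Definition is_NE (A B : mat3) (x y : vec3) : Prop :=
  in_simplex x /\ in_simplex y /\
  (forall x', in_simplex x' -> bilin x' A y <= bilin x A y) /\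
  (forall y', in_simplex y' -> bilin x B y' <= bilin x B y).

(* Strategies are identified by their values on indices 0,1,2. *)
Definition eq3 (x x' : vec3) : Prop := forall i, (i < 3)%nat -> x i = x' i.

Definition full_support (x : vec3) : Prop := forall i, (i < 3)%nat -> 0 < x i.

Definition D (e1 e2 : R) : mat3 := fun i j =>
  match i, j with
  | O, S O => 4
  | S O, O => 2 | S O, S (S O) => 4 + e1
  | S (S O), O => 3 | S (S O), S O => 2 + e2
  | _, _ => 0
  end.

(* Main.v *)
Require Import Defs.
From Stdlib Require Import Reals Lra Lia.
Open Scope R_scope.

Definition row (A : mat3) (y : vec3) (i : nat) := sum3 (fun j => A i j * y j).
Definition pure (k : nat) : vec3 := fun j => if Nat.eqb j k then 1 else 0.

Lemma bilin_row A x y : bilin x A y = sum3 (fun i => x i * row A y i).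
Proof. unfold bilin, row, sum3; ring. Qed.

Lemma pure_simplex k : (k < 3)%nat -> in_simplex (pure k).
Proof.
  intro Hk. split.
  - intros i _. unfold pure. destruct (Nat.eqb i k); lra.
  - unfold sum3, pure. destruct k as [|[|[|k]]]; simpl; try lra; lia.
Qed.

Lemma bilin_pure A y k : (k < 3)%nat -> bilin (pure k) A y = row A y k.
Proof.
  intro Hk. rewrite bilin_row. unfold sum3, pure.
  destruct k as [|[|[|k]]]; simpl; try ring; lia.
Qed.

Lemma br1 (A : mat3) x y : in_simplex x ->
  (forall x', in_simplex x' -> bilin x' A y <= bilin x A y) ->
  forall i k, (i < 3)%nat -> (k < 3)%nat -> row A y i < row A y k -> x i = 0.
Proof.
  intros [Hn Hs] H i k Hi Hk Hlt.
  set (v := bilin x A y).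
  assert (H0 : row A y 0 <= v) by (rewrite <- bilin_pure by lia; apply H, pure_simplex; lia).
  assert (H1 : row A y 1 <= v) by (rewrite <- bilin_pure by lia; apply H, pure_simplex; lia).
  assert (H2 : row A y 2 <= v) by (rewrite <- bilin_pure by lia; apply H, pure_simplex; lia).
  assert (Hv : v = sum3 (fun i => x i * row A y i)) by apply bilin_row.
  unfold sum3 in Hs, Hv.
  assert (x0 := Hn 0%nat ltac:(lia)); assert (x1 := Hn 1%nat ltac:(lia)); assert (x2 := Hn 2%nat ltac:(lia)).
  assert (P0 : 0 <= x 0%nat * (v - row A y 0)) by (apply Rmult_le_pos; lra).
  assert (P1 : 0 <= x 1%nat * (v - row A y 1)) by (apply Rmult_le_pos; lra).
  assert (P2 : 0 <= x 2%nat * (v - row A y 2)) by (apply Rmult_le_pos; lra).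
  assert (Hz : x 0%nat * (v - row A y 0) + x 1%nat * (v - row A y 1) + x 2%nat * (v - row A y 2) = 0).
  { replace (x 0%nat * (v - row A y 0) + x 1%nat * (v - row A y 1) + x 2%nat * (v - row A y 2))
      with (v * (x 0%nat + x 1%nat + x 2%nat) - (x 0%nat * row A y 0 + x 1%nat * row A y 1 + x 2%nat * row A y 2)) by ring.
    rewrite Hs, <- Hv. ring. }
  assert (Hvi : row A y i < v) by (destruct k as [|[|[|k]]]; [lra|lra|lra|lia]).
  assert (Hxi : 0 <= x i) by (apply Hn; auto).
  destruct Hxi as [Hp|Heq]; [|auto].
  exfalso.
  assert (0 < x i * (v - row A y i)) by (apply Rmult_lt_0_compat; lra).
  destruct i as [|[|[|i]]]; [lra|lra|lra|lia].
Qed.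

Lemma bilin_tr x B y : bilin x B y = bilin y (transpose3 B) x.
Proof. unfold bilin, transpose3, sum3; ring. Qed.

Ltac kill :=
  match goal with
  | H : ?a < ?b -> ?x = 0, Hx : 0 < ?x |- _ =>
      exfalso; assert (Hc : a < b) by (clear H; lra); specialize (H Hc); lra
  end.

Lemma core p q r s t u m1 m2 n1 n2 :
  0 <= m1 <= r -> 0 <= m2 <= q -> 0 <= n1 <= u -> 0 <= n2 <= t ->
  0 <= p -> 0 <= q -> 0 <= r -> 0 <= s -> 0 <= t -> 0 <= u ->
  p + q + r = 1 -> s + t + u = 1 ->
  (4*q < 2*p + 4*r + m1 -> s = 0) -> (4*q < 3*p + 2*q + m2 -> s = 0) ->
  (2*p + 4*r + m1 < 4*q -> t = 0) -> (2*p + 4*r + m1 < 3*p + 2*q + m2 -> t = 0) ->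
  (3*p + 2*q + m2 < 4*q -> u = 0) -> (3*p + 2*q + m2 < 2*p + 4*r + m1 -> u = 0) ->
  (4*t < 2*s + 4*u + n1 -> p = 0) -> (4*t < 3*s + 2*t + n2 -> p = 0) ->
  (2*s + 4*u + n1 < 4*t -> q = 0) -> (2*s + 4*u + n1 < 3*s + 2*t + n2 -> q = 0) ->
  (3*s + 2*t + n2 < 4*t -> r = 0) -> (3*s + 2*t + n2 < 2*s + 4*u + n1 -> r = 0) ->
  0 < p /\ 0 < q /\ 0 < r /\ 0 < s /\ 0 < t /\ 0 < u.
Proof.
  intros M1 M2 N1 N2 X0 X1 X2 Y0 Y1 Y2 Hp Hs A01 A02 A10 A12 A20 A21 B01 B02 B10 B12 B20 B21.
  destruct X0 as [X0|X0]; destruct X1 as [X1|X1]; destruct X2 as [X2|X2];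
  destruct Y0 as [Y0|Y0]; destruct Y1 as [Y1|Y1]; destruct Y2 as [Y2|Y2];
  try subst p; try subst q; try subst r; try subst s; try subst t; try subst u;
  try (repeat split; assumption); try lra;
  try kill; try kill; try kill.
Qed.

Definition Sd e1 e2 := 3*(4+e1) + (2-e2)*(4+e1) + (8+2*e2).
Definition sol e1 e2 : vec3 := fun i =>
  match i with
  | O => (2-e2)*(4+e1)/Sd e1 e2
  | S O => 3*(4+e1)/Sd e1 e2
  | _ => (8+2*e2)/Sd e1 e2
  end.

Lemma Sd_pos e1 e2 : 0 <= e1 <= 1 -> 0 <= e2 <= 1 -> 0 < Sd e1 e2.
Proof.
  intros. unfold Sd. assert (0 <= (2-e2)*(4+e1)) by (apply Rmult_le_pos; lra). lra.
Qed.

Lemma sol_simplex e1 e2 : 0 <= e1 <= 1 -> 0 <= e2 <= 1 -> in_simplex (sol e1 e2).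
Proof.
  intros H1 H2. pose proof (Sd_pos e1 e2 H1 H2) as HS. split.
  - intros [|[|[|i]]] Hi; unfold sol; try lia;
      apply Rmult_le_pos; try (apply Rlt_le, Rinv_0_lt_compat; lra);
      try (apply Rmult_le_pos); lra.
  - unfold sum3, sol. field_simplify; [|lra]. unfold Sd. field. unfold Sd in HS; lra.
Qed.

Lemma sol_full e1 e2 : 0 <= e1 <= 1 -> 0 <= e2 <= 1 -> full_support (sol e1 e2).
Proof.
  intros H1 H2. pose proof (Sd_pos e1 e2 H1 H2) as HS.
  intros [|[|[|i]]] Hi; unfold sol; try lia;
      apply Rmult_lt_0_compat; try (apply Rinv_0_lt_compat; lra);
      try (apply Rmult_lt_0_compat); lra.
Qed.

Lemma pay1 e1 e2 z : 0 <= e1 <= 1 -> 0 <= e2 <= 1 ->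
  bilin z (D e1 e2) (sol e1 e2) = 12*(4+e1)/Sd e1 e2 * sum3 z.
Proof.
  intros H1 H2. pose proof (Sd_pos e1 e2 H1 H2) as HS.
  unfold bilin, sum3, sol, D. cbn. unfold Sd in *. field. lra.
Qed.

Lemma pay2 e1 e2 z : 0 <= e1 <= 1 -> 0 <= e2 <= 1 ->
  bilin (sol e1 e2) (transpose3 (D e1 e2)) z = 12*(4+e1)/Sd e1 e2 * sum3 z.
Proof.
  intros H1 H2. pose proof (Sd_pos e1 e2 H1 H2) as HS.
  unfold bilin, transpose3, sum3, sol, D. cbn. unfold Sd in *. field. lra.
Qed.

Lemma solve e1 e2 p q r : 0 <= e1 <= 1 -> 0 <= e2 <= 1 ->
  p + q + r = 1 -> 4*q = 2*p + (4+e1)*r -> 4*q = 3*p + (2+e2)*q ->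
  p = sol e1 e2 0%nat /\ q = sol e1 e2 1%nat /\ r = sol e1 e2 2%nat.
Proof.
  intros H1 H2 Hs E1 E2. pose proof (Sd_pos e1 e2 H1 H2) as HS.
  assert (K : Sd e1 e2 * q = 3*(4+e1)*(p+q+r) + (4+e1)*((2-e2)*q - 3*p)
     + 3*(4*q - 2*p - (4+e1)*r) - 2*((2-e2)*q - 3*p)) by (unfold Sd; ring).
  assert (Z1 : (2-e2)*q - 3*p = 0) by lra.
  assert (Z2 : 4*q - 2*p - (4+e1)*r = 0) by lra.
  rewrite Z1, Z2, Hs in K.
  assert (Hq : q = 3*(4+e1)/Sd e1 e2).
  { apply (Rmult_eq_reg_l (Sd e1 e2)); [|lra]. rewrite K. field. lra. }
  assert (Hp : p = (2-e2)*q/3) by lra.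
  assert (Hr : (4+e1)*r = 4*q - 2*p) by lra.
  unfold sol. split; [|split].
  - rewrite Hp, Hq. field. lra.
  - exact Hq.
  - apply (Rmult_eq_reg_l (4+e1)); [|lra]. rewrite Hr, Hp, Hq. unfold Sd in *. field. lra.
Qed.

Theorem lemma3p2 :
  exists delta : R, 0 < delta /\
  forall e1 e2 e1' e2' : R,
    0 <= e1 <= delta -> 0 <= e2 <= delta ->
    0 <= e1' <= delta -> 0 <= e2' <= delta ->
    let A := D e1 e2 in
    let B := transpose3 (D e1' e2') in
    exists x y : vec3,
      is_NE A B x y /\
      (forall x' y', is_NE A B x' y' -> eq3 x' x /\ eq3 y' y) /\
      full_support x /\ full_support y /\
      ((e1 = e1' /\ e2 = e2') -> eq3 x y).
Proof.
  exists 1. split; [lra|].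
  intros e1 e2 e1' e2' H1 H2 H3 H4 A B.
  exists (sol e1' e2'), (sol e1 e2).
  split; [|split; [|split; [|split]]].
  - split; [apply sol_simplex; auto|]. split; [apply sol_simplex; auto|].
    split.
    + intros x' Hx'. unfold A. rewrite !pay1 by auto.
      destruct Hx' as [_ ->]. destruct (sol_simplex e1' e2' H3 H4) as [_ ->]. lra.
    + intros y' Hy'. unfold B. rewrite !pay2 by auto.
      destruct Hy' as [_ ->]. destruct (sol_simplex e1 e2 H1 H2) as [_ ->]. lra.
  - intros x' y' [Sx [Sy [NA NB]]].
    pose proof (br1 A x' y' Sx NA) as HA.
    assert (NB' : forall y'', in_simplex y'' -> bilin y'' (transpose3 B) x' <= bilin y' (transpose3 B) x').
    { intros y'' Hy. rewrite <- !bilin_tr. auto. }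
    pose proof (br1 (transpose3 B) y' x' Sy NB') as HB.
    unfold A, B in *. clear NA NB NB'.
    pose proof Sx as [Xn Xs]. pose proof Sy as [Yn Ys]. unfold sum3 in Xs, Ys.
    assert (M1 : 0 <= e1 * y' 2%nat <= y' 2%nat) by (pose proof (Yn 2%nat ltac:(lia)); split; nra).
    assert (M2 : 0 <= e2 * y' 1%nat <= y' 1%nat) by (pose proof (Yn 1%nat ltac:(lia)); split; nra).
    assert (N1 : 0 <= e1' * x' 2%nat <= x' 2%nat) by (pose proof (Xn 2%nat ltac:(lia)); split; nra).
    assert (N2 : 0 <= e2' * x' 1%nat <= x' 1%nat) by (pose proof (Xn 1%nat ltac:(lia)); split; nra).
    assert (Pos := core (y' 0%nat) (y' 1%nat) (y' 2%nat) (x' 0%nat) (x' 1%nat) (x' 2%nat)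
      (e1 * y' 2%nat) (e2 * y' 1%nat) (e1' * x' 2%nat) (e2' * x' 1%nat) M1 M2 N1 N2
      (Yn 0%nat ltac:(lia)) (Yn 1%nat ltac:(lia)) (Yn 2%nat ltac:(lia))
      (Xn 0%nat ltac:(lia)) (Xn 1%nat ltac:(lia)) (Xn 2%nat ltac:(lia)) Ys Xs).
    assert (RA : forall i k, (i < 3)%nat -> (k < 3)%nat -> 0 < x' i ->
       ~ row (D e1 e2) y' i < row (D e1 e2) y' k).
    { intros i k Hi Hk Hp Hl. specialize (HA i k Hi Hk Hl). lra. }
    assert (RB : forall i k, (i < 3)%nat -> (k < 3)%nat -> 0 < y' i ->
       ~ row (transpose3 (transpose3 (D e1' e2'))) x' i < row (transpose3 (transpose3 (D e1' e2'))) x' k).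
    { intros i k Hi Hk Hp Hl. specialize (HB i k Hi Hk Hl). lra. }
    unfold row, sum3, transpose3, D in HA, HB, RA, RB. cbn in HA, HB, RA, RB.
    destruct Pos as [P0 [P1 [P2 [P3 [P4 P5]]]]].
    + intros h; apply (HA 0%nat 1%nat); try lia; lra.
    + intros h; apply (HA 0%nat 2%nat); try lia; lra.
    + intros h; apply (HA 1%nat 0%nat); try lia; lra.
    + intros h; apply (HA 1%nat 2%nat); try lia; lra.
    + intros h; apply (HA 2%nat 0%nat); try lia; lra.
    + intros h; apply (HA 2%nat 1%nat); try lia; lra.
    + intros h; apply (HB 0%nat 1%nat); try lia; lra.
    + intros h; apply (HB 0%nat 2%nat); try lia; lra.
    + intros h; apply (HB 1%nat 0%nat); try lia; lra.
    + intros h; apply (HB 1%nat 2%nat); try lia; lra.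
    + intros h; apply (HB 2%nat 0%nat); try lia; lra.
    + intros h; apply (HB 2%nat 1%nat); try lia; lra.
    + pose proof (RA 0%nat 1%nat ltac:(lia) ltac:(lia) P3) as a01.
      pose proof (RA 1%nat 0%nat ltac:(lia) ltac:(lia) P4) as a10.
      pose proof (RA 2%nat 0%nat ltac:(lia) ltac:(lia) P5) as a20.
      pose proof (RA 0%nat 2%nat ltac:(lia) ltac:(lia) P3) as a02.
      pose proof (RB 0%nat 1%nat ltac:(lia) ltac:(lia) P0) as b01.
      pose proof (RB 1%nat 0%nat ltac:(lia) ltac:(lia) P1) as b10.
      pose proof (RB 2%nat 0%nat ltac:(lia) ltac:(lia) P2) as b20.
      pose proof (RB 0%nat 2%nat ltac:(lia) ltac:(lia) P0) as b02.
      destruct (solve e1 e2 (y' 0%nat) (y' 1%nat) (y' 2%nat) H1 H2 Ys) as [Ey0 [Ey1 Ey2]]; try lra.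
      destruct (solve e1' e2' (x' 0%nat) (x' 1%nat) (x' 2%nat) H3 H4 Xs) as [Ex0 [Ex1 Ex2]]; try lra.
      split; intros [|[|[|i]]] Hi; auto; lia.
  - apply sol_full; auto.
  - apply sol_full; auto.
  - intros [-> ->] i _. reflexivity.
Qed.
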